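(* Let $n\geq 1$ and $k\geq 0$ be integers and $d_1,\dots,d_k$ positive integers with $\sum_{i=1}^k d_i\leq n+1$. Then $F_n(t;d_1,\dots,d_k)$ is a polynomial in $t$ with non-negative coefficients.
   Context: For an integer $m>0$, $\binom{t}{m}=\frac{1}{m!}\prod_{i=0}^{m-1}(t-i)$. For $I\subset\{1,\dots,k\}$, $d_I=\sum_{i\in I}d_i$ (with $d_\emptyset=0$). Define $F_n(t;d_1,\dots,d_k)=\sum_{I\subset\{1,\dots,k\}}(-1)^{|I|}\binom{t+n-d_I}{n}$. *)

(* Defs.v *)
From mathcomp Require Import all_boot all_order all_algebra.
Set Implicit Arguments. Unset Strict Implicit. Unset Printing Implicit Defensive.
Import Order.TTheory GRing.Theory Num.Theory.
Local Open Scope ring_scope.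

Definition binom_poly (p : {poly rat}) (m : nat) : {poly rat} :=
  (m`!%:R)^-1 *: \prod_(i < m) (p - (i%:R)%:P).

Definition dsum (k : nat) (d : 'I_k -> nat) (I : {set 'I_k}) : nat :=
  (\sum_(i in I) d i)%N.

Definition Fpoly (n k : nat) (d : 'I_k -> nat) : {poly rat} :=
  \sum_(I : {set 'I_k})
     (-1) ^+ #|I| *: binom_poly ('X + ((n%:Z - (dsum d I)%:Z)%:~R)%:P) n.

(* Main.v *)
Require Import Defs.
From mathcomp Require Import all_boot all_order all_algebra all_field.
From mathcomp Require Import ring zify.
Set Implicit Arguments. Unset Strict Implicit. Unset Printing Implicit Defensive.
Import Order.TTheory GRing.Theory Num.Theory.
Local Open Scope ring_scope.

Section Act.
Variable R : comNzRingType.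
Implicit Types (P Q A B : {poly R}).

Definition shiftn (i : nat) P := P \Po ('X - (i%:R)%:P).
Definition act A P := \sum_(i < size A) A`_i *: shiftn i P.

Lemma shiftn0 P : shiftn 0 P = P.
Proof. by rewrite /shiftn subr0 comp_polyXr. Qed.

Lemma shiftnD i j P : shiftn (i + j) P = shiftn i (shiftn j P).
Proof.
rewrite /shiftn -comp_polyA comp_polyB comp_polyX comp_polyC natrD.
by congr (_ \Po _); rewrite rmorphD /= opprD addrA.
Qed.

Lemma shiftn_add i P Q : shiftn i (P + Q) = shiftn i P + shiftn i Q.
Proof. by rewrite /shiftn comp_polyD. Qed.
Lemma shiftn_scale i c P : shiftn i (c *: P) = c *: shiftn i P.
Proof. by rewrite /shiftn comp_polyZ. Qed.
Lemma shiftn_opp i P : shiftn i (- P) = - shiftn i P.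
Proof. by rewrite -scaleN1r shiftn_scale scaleN1r. Qed.
Lemma shiftn_0 i : shiftn i 0 = 0.
Proof. by rewrite /shiftn comp_poly0. Qed.
Lemma shiftn_sum i (I : Type) (r : seq I) (F : I -> {poly R}) :
  shiftn i (\sum_(j <- r) F j) = \sum_(j <- r) shiftn i (F j).
Proof.
elim: r => [|a r IH]; first by rewrite !big_nil shiftn_0.
by rewrite !big_cons shiftn_add IH.
Qed.

Lemma act_widen A P N : (size A <= N)%N ->
  act A P = \sum_(i < N) A`_i *: shiftn i P.
Proof.
move=> hN; rewrite /act (big_ord_widen _ (fun i => A`_i *: shiftn i P) hN).
rewrite [RHS](bigID (fun i : 'I_N => (i < size A)%N)) /=.
rewrite [X in _ = _ + X]big1 ?addr0 // => i; rewrite -leqNgt => hi.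
by rewrite nth_default // scale0r.
Qed.

Lemma actD A B P : act (A + B) P = act A P + act B P.
Proof.
pose N := maxn (size A) (size B).
have hA : (size A <= N)%N by rewrite leq_maxl.
have hB : (size B <= N)%N by rewrite leq_maxr.
have hAB : (size (A + B)%R <= N)%N by apply: leq_trans (size_polyD A B) _; rewrite geq_max hA hB.
rewrite (act_widen _ hA) (act_widen _ hB) (act_widen _ hAB) -big_split /=.
by apply: eq_bigr => i _; rewrite coefD scalerDl.
Qed.

Lemma actZ c A P : act (c *: A) P = c *: act A P.
Proof.
rewrite (act_widen _ (size_scale_leq _ _)) /act scaler_sumr.
by apply: eq_bigr => i _; rewrite coefZ scalerA.
Qed.

Lemma act0 P : act 0 P = 0.
Proof. by rewrite /act size_poly0 big_ord0. Qed.

Lemma actC c P : act c%:P P = c *: P.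
Proof.
rewrite (act_widen _ (size_polyC_leq1 c)) big_ord1 coefC /= shiftn0.
by [].
Qed.

Lemma act_addr A P Q : act A (P + Q) = act A P + act A Q.
Proof.
rewrite /act -big_split /=; apply: eq_bigr => i _.
by rewrite shiftn_add scalerDr.
Qed.

Lemma act_scaler A c P : act A (c *: P) = c *: act A P.
Proof.
rewrite /act scaler_sumr; apply: eq_bigr => i _.
by rewrite shiftn_scale !scalerA mulrC.
Qed.

Lemma act_shift A P : act A (shiftn 1 P) = shiftn 1 (act A P).
Proof.
rewrite /act shiftn_sum; apply: eq_bigr => i _.
by rewrite shiftn_scale -!shiftnD addnC.
Qed.

Lemma actXM A P : act (A * 'X) P = act A (shiftn 1 P).
Proof.
have [->|nz] := eqVneq A 0; first by rewrite mul0r !act0.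
rewrite /act size_mulX // big_ord_recl coefMX /= scale0r add0r.
apply: eq_bigr => i _; rewrite coefMX /= -shiftnD.
by rewrite /bump /= add1n addn1.
Qed.

Lemma actM A B P : act (A * B) P = act A (act B P).
Proof.
elim/poly_ind: A B P => [|A c IH] B P; first by rewrite mul0r !act0.
rewrite mulrDl -mulrA (mulrC 'X) mulrA mul_polyC actD actZ.
rewrite -mulrA IH actXM actD actXM actC; congr (_ + _).
by rewrite act_shift.
Qed.

Lemma act_sum (I : Type) (r : seq I) (F : I -> {poly R}) P :
  act (\sum_(j <- r) F j) P = \sum_(j <- r) act (F j) P.
Proof.
elim: r => [|a r IH]; first by rewrite !big_nil act0.
by rewrite !big_cons actD IH.
Qed.

Lemma act_Xn s P : act 'X^s P = shiftn s P.
Proof.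
elim: s P => [|s IH] P; first by rewrite expr0 actC scale1r shiftn0.
by rewrite exprSr actXM IH -shiftnD addn1.
Qed.

Definition T (w : R) P := shiftn 1 P - w *: P.

Lemma act_lin w P : act ('X - w%:P) P = T w P.
Proof. by rewrite actD -[X in act X P]expr1 act_Xn -polyCN actC scaleNr. Qed.

Lemma act_prod (zs : seq R) P :
  act (\prod_(z <- zs) ('X - z%:P)) P = foldr T P zs.
Proof.
elim: zs => [|z zs IH] /=; first by rewrite big_nil actC scale1r.
by rewrite big_cons actM IH act_lin.
Qed.

End Act.
Section Key.
Local Notation nr x := (x * x^*).

Lemma nr_ge0 (x : algC) : 0 <= nr x.
Proof. by rewrite -normCK exprn_ge0. Qed.
Lemma nr_gt0 (x : algC) : x != 0 -> 0 < nr x.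
Proof. by move=> h; rewrite -normCK exprn_gt0 // normr_gt0. Qed.
Lemma nrM (x y : algC) : nr (x * y) = nr x * nr y.
Proof. by rewrite rmorphM /=; ring. Qed.
Lemma nr_prod (r : seq algC) (F : algC -> algC) :
  nr (\prod_(z <- r) F z) = \prod_(z <- r) nr (F z).
Proof.
elim: r => [|a r IH]; first by rewrite !big_nil conjC1 mulr1.
by rewrite !big_cons nrM IH.
Qed.

Lemma key (p : {poly algC}) (M : nat) (w : algC) :
  w * w^* = 1 -> w != 1 ->
  (forall t, p.[t] = 0 -> t + t^* = - (M.+1)%:R) ->
  forall t, ('X * shiftn 1 p - w *: (('X + (M%:R)%:P) * p)).[t] = 0 ->
  t + t^* = - M%:R.
Proof.
move=> hw hw1 hp t.
rewrite hornerD hornerN hornerZ !hornerM hornerX hornerD hornerX hornerC.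
rewrite /shiftn horner_comp hornerXsubC => /eqP; rewrite subr_eq0 => /eqP H.
pose s := t + t^* + M%:R.
suff : s == 0 by rewrite /s addr_eq0 => /eqP.
have sreal : s \is Num.real.
  by rewrite CrealE /s !rmorphD /= conjCK conjC_nat; apply/eqP; ring.
have [rs hrs] := closed_field_poly_normal p.
set lc := lead_coef p in hrs.
have lc0 : lc != 0.
  rewrite lead_coef_eq0; apply/eqP => p0.
  have := hp 0; rewrite p0 horner0 => /(_ erefl); rewrite conjC0 addr0.
  by move/eqP; rewrite eq_sym oppr_eq0 pnatr_eq0.
have hroot : forall r, r \in rs -> r^* = - (M.+1)%:R - r.
  move=> r hr; have := hp r; rewrite hrs hornerZ -/(root _ r).
  move: (hr); rewrite -root_prod_XsubC => /eqP ->; rewrite mulr0 => /(_ erefl).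
  by move=> e; rewrite -e; ring.
have idn : forall r, r \in rs -> nr (t - r) = nr (t - 1 - r) + s.
  move=> r hr; rewrite !rmorphB /= conjC1 (hroot r hr) /s -addn1 natrD; ring.
have ptE : forall x, p.[x] = lc * \prod_(z <- rs) (x - z).
  move=> x; rewrite {1}hrs hornerZ horner_prod; congr (_ * _).
  by apply: eq_bigr => z _; rewrite hornerXsubC.
have nrE : nr (t + M%:R) = nr t + M%:R * s.
  by rewrite rmorphD /= conjC_nat /s; ring.
have HN : nr t * nr p.[t - 1] = nr (t + M%:R) * nr p.[t].
  by rewrite -nrM H !nrM hw mul1r.
case: rs hrs ptE idn hroot => [|r0 rs] hrs ptE idn hroot.
  have pc : forall x, p.[x] = lc by move=> x; rewrite ptE big_nil mulr1.
  move: H; rewrite !pc mulrA => /(mulIf lc0) H.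
  have [M0|Mpos] := eqVneq M 0%N.
    move: H; rewrite M0 addr0 -{1}(mul1r t) => /eqP; rewrite -subr_eq0 -mulrBl.
    rewrite mulf_eq0 subr_eq0 eq_sym (negPf hw1) /= => /eqP t0.
    by rewrite /s t0 conjC0 M0 !addr0.
  have := congr1 (fun x => x * x^*) H; rewrite /= nrM hw mul1r.
  rewrite nrE => /eqP; rewrite eq_sym -subr_eq0 addrAC subrr add0r mulf_eq0.
  by rewrite pnatr_eq0 (negPf Mpos).
have hasr : has predT (r0 :: rs) by [].
have nlc := nr_gt0 lc0.
pose A := nr (t + M%:R); pose B := nr p.[t]; pose C := nr t; pose D := nr p.[t - 1].
have A0 : 0 <= A := nr_ge0 _. have B0 : 0 <= B := nr_ge0 _.
have C0 : 0 <= C := nr_ge0 _. have D0 : 0 <= D := nr_ge0 _.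
have BE : B = nr lc * \prod_(z <- r0 :: rs) nr (t - z) by rewrite /B ptE nrM nr_prod.
have DE : D = nr lc * \prod_(z <- r0 :: rs) nr (t - 1 - z).
  by rewrite /D ptE nrM nr_prod.
case: (real_ltgtP sreal (real0 _)) => // hs; exfalso.
-
  have DB : B < D.
    rewrite BE DE ltr_pM2l // !big_seq; apply: ltr_prod.
      by apply/hasP; exists r0; rewrite mem_head.
    by move=> z hz; rewrite nr_ge0 /= idn // gtrDl.
  have CA : A <= C by rewrite /A nrE gerDl mulr_ge0_le0 // ltW.
  have Cpos : 0 < C.
    rewrite lt_def C0 andbT; apply/eqP => C00.
    have : t == 0 by rewrite -normr_eq0 -sqrf_eq0 normCK -/C C00.
    move/eqP => t0; move: hs; rewrite /s t0 conjC0 !add0r.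
    by move=> hM; have := le_lt_trans (ler0n _ M) hM; rewrite ltxx.
  have HN' : C * D = A * B := HN.
  have : A * B < C * D.
    apply: (@le_lt_trans _ _ (C * B)); first by rewrite ler_wpM2r.
    by rewrite ltr_pM2l.
  by rewrite HN' ltxx.
-
  have DB : D < B.
    rewrite BE DE ltr_pM2l // !big_seq; apply: ltr_prod.
      by apply/hasP; exists r0; rewrite mem_head.
    by move=> z hz; rewrite nr_ge0 /= idn // ltrDl.
  have CA : C <= A by rewrite /A nrE lerDl mulr_ge0 // ltW.
  have HN' : C * D = A * B := HN.
  have : C * D < A * B.
    have [C00|Cpos] := eqVneq C 0.
      have t0 : t = 0.
        by apply/eqP; rewrite -normr_eq0 -sqrf_eq0 normCK; apply/eqP; exact: C00.
      have Mp : (0 : algC) < M%:R.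
        rewrite ltr0n lt0n; apply/eqP => M0.
        by move: hs; rewrite /s t0 M0 conjC0 !addr0 ltxx.
      have Apos : 0 < A by rewrite /A t0 add0r rmorph_nat mulr_gt0.
      by rewrite C00 mul0r mulr_gt0 // (le_lt_trans D0 DB).
    have Cpos' : 0 < C by rewrite lt_def Cpos C0.
    apply: (@lt_le_trans _ _ (C * B)); first by rewrite ltr_pM2l.
    by rewrite ler_wpM2r.
  by rewrite HN' ltxx.
Qed.
End Key.
Section Pos.
Local Notation cj := (map_poly (Num.conj_op : algC -> algC)).
Definition nnp (M : {poly algC}) := forall j, 0 <= M`_j.

Lemma nnpM A B : nnp A -> nnp B -> nnp (A * B).
Proof.
move=> hA hB j; rewrite coefM; apply: sumr_ge0 => i _; exact: mulr_ge0.
Qed.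

Lemma nnp1 : nnp 1.
Proof. by move=> j; rewrite coef1; case: (j == 0)%N. Qed.

Lemma nnp_lin (a : algC) : a \is Num.real -> a + a^* <= 0 -> nnp ('X - a%:P).
Proof.
move=> ar ha j; have aa : a^* = a by apply/eqP; rewrite -CrealE.
have a0 : a <= 0.
  rewrite real_leNgt ?real0 //; apply/negP => h.
  by have := le_lt_trans ha (addr_gt0 h h); rewrite aa ltxx.
rewrite coefB coefX coefC.
case: j => [|[|j]] /=; rewrite ?subr0 ?sub0r ?oppr_ge0 ?ler01 ?subrr //.
Qed.

Lemma nnp_quad (a : algC) : a + a^* <= 0 ->
  nnp (('X - (a^*)%:P) * ('X - a%:P)).
Proof.
move=> ha j.
have -> : ('X - (a^*)%:P) * ('X - a%:P) =
  'X^2 + (- (a + a^*))%:P * 'X + (a * a^*)%:P.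
  rewrite polyCN polyCD polyCM; ring.
rewrite !coefD coefXn coefCM coefX coefC.
have h1 : 0 <= - (a + a^*) by rewrite oppr_ge0.
have h0 : 0 <= a * a^* by rewrite -normCK exprn_ge0.
by case: j => [|[|[|j]]] /=; rewrite ?mulr0 ?mulr1 ?add0r ?addr0 ?ler01.
Qed.

Lemma pos_fact n (G : {poly algC}) : (size G <= n)%N -> cj G = G ->
  (forall t, G.[t] = 0 -> t + t^* <= 0) ->
  exists M, G = lead_coef G *: M /\ nnp M.
Proof.
elim: n G => [|n IH] G hs hG hr.
  exists 1; split; last exact: nnp1.
  by move: hs; rewrite leqn0 size_poly_eq0 => /eqP ->; rewrite lead_coef0 scale0r.
have G0 : G != 0.
  apply/eqP => G0; have := hr 1; rewrite G0 horner0 conjC1 => /(_ erefl).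
  by move=> h; have := le_lt_trans h (addr_gt0 ltr01 ltr01); rewrite ltxx.
have [hs1|hs1] := leqP (size G) 1.
  exists 1; split; last exact: nnp1.
  by rewrite {1}(size1_polyC hs1) (lead_coefE) -[size G]prednK ?size_poly_gt0 //
     alg_polyC; move: hs1; rewrite -[size G]prednK ?size_poly_gt0 // ltnS leqn0 => /eqP ->.
have : size G != 1 by rewrite neq_ltn hs1 orbT.
move/closed_rootP => [r /factor_theorem [G1 hG1]].
have rt : r + r^* <= 0 by apply: hr; rewrite hG1 hornerM hornerXsubC subrr mulr0.
have G10 : G1 != 0 by apply: contraNneq G0 => G10; rewrite hG1 G10 mul0r.
have [rr|rnr] := eqVneq r^* r.
  have cG1 : cj G1 = G1.
    apply: (mulIf (negbT (polyXsubC_eq0 r))); rewrite -hG1 -{1}hG.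
    by rewrite hG1 rmorphM /= map_polyXsubC /= rr.
  have sG1 : (size G1 <= n)%N.
    by move: hs; rewrite hG1 size_mul ?polyXsubC_eq0 // size_XsubC addn2 /=.
  have [M1 [hM1 nM1]] : exists M, G1 = lead_coef G1 *: M /\ nnp M.
    apply: IH => // t ht; apply: hr; by rewrite hG1 hornerM ht mul0r.
  exists (M1 * ('X - r%:P)); split.
    by rewrite hG1 lead_coefM lead_coefXsubC mulr1 {1}hM1 scalerAl.
  apply: nnpM => //; apply: nnp_lin => //; by rewrite CrealE rr.
have Gc : G.[r^*] = 0.
  by rewrite -{1}hG horner_map /= hG1 hornerM hornerXsubC subrr mulr0 conjC0.
have : G1.[r^*] = 0.
  move: Gc; rewrite hG1 hornerM hornerXsubC => /eqP; rewrite mulf_eq0 subr_eq0.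
  by rewrite (negPf rnr) orbF => /eqP.
move/eqP/factor_theorem => [G2 hG2].
have Q0 : ('X - (r^*)%:P) * ('X - r%:P) != 0 by rewrite mulf_neq0 ?polyXsubC_eq0.
have GE : G = G2 * (('X - (r^*)%:P) * ('X - r%:P)) by rewrite hG1 hG2 mulrA.
have cQ : cj (('X - (r^*)%:P) * ('X - r%:P)) = ('X - (r^*)%:P) * ('X - r%:P).
  by rewrite rmorphM /= !map_polyXsubC /= conjCK mulrC.
have cG2 : cj G2 = G2.
  apply: (mulIf Q0); rewrite -GE -{1}hG GE rmorphM /= cQ //.
have G20 : G2 != 0 by apply: contraNneq G0 => G20; rewrite GE G20 mul0r.
have sG2 : (size G2 <= n)%N.
  move: hs; rewrite GE size_mul // size_mul ?polyXsubC_eq0 // !size_XsubC /=.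
  move=> h; have h3 : (0 + 1%R + 2%R = 3)%N by []. move: h; rewrite h3 addnS /= addn2 => h; exact: ltnW h.
have [M2 [hM2 nM2]] : exists M, G2 = lead_coef G2 *: M /\ nnp M.
  apply: IH => // t ht; apply: hr; by rewrite GE hornerM ht mul0r.
exists (M2 * (('X - (r^*)%:P) * ('X - r%:P))); split.
  by rewrite GE lead_coefM lead_coefM !lead_coefXsubC !mulr1 {1}hM2 scalerAl.
by apply: nnpM => //; apply: nnp_quad.
Qed.
End Pos.

Section Chain.
Definition pr (N : nat) : {poly algC} := \prod_(i < N) ('X + ((i.+1)%:R)%:P).

Lemma prS N : pr N.+1 = pr N * ('X + ((N.+1)%:R)%:P).
Proof. by rewrite /pr big_ord_recr. Qed.

Lemma shiftn_mul (R : comNzRingType) i (P Q : {poly R}) :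
  shiftn i (P * Q) = shiftn i P * shiftn i Q.
Proof. by rewrite /shiftn comp_polyM. Qed.

Lemma shiftn_prodo (R : comNzRingType) i N (F : 'I_N -> {poly R}) :
  shiftn i (\prod_(j < N) F j) = \prod_(j < N) shiftn i (F j).
Proof.
elim: N F => [|N IH] F; first by rewrite !big_ord0 /shiftn comp_polyC.
by rewrite !big_ord_recr shiftn_mul IH.
Qed.

Lemma shift_prS N : shiftn 1 (pr N.+1) = 'X * pr N.
Proof.
rewrite /pr big_ord_recl shiftn_mul shiftn_prodo /shiftn comp_polyD comp_polyX comp_polyC.
rewrite subrK; congr (_ * _); apply: eq_bigr => i _.
rewrite comp_polyD comp_polyX comp_polyC /bump /= -addrA -polyCN -polyCD.
by rewrite /bump /= add1n -[(i.+2)%:R]nat1r addKr.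
Qed.

Definition Inv (P : {poly algC}) N :=
  exists p, P = p * pr N /\ forall t, p.[t] = 0 -> t + t^* = - (N.+1)%:R.
Definition Good (P : {poly algC}) := forall t, P.[t] = 0 -> t + t^* <= 0.

Lemma Inv_Good P N : Inv P N -> Good P.
Proof.
move=> [p [-> hp]] t; rewrite hornerM => /eqP; rewrite mulf_eq0 => /orP [/eqP h|].
  by rewrite hp // oppr_le0 ler0n.
rewrite /pr horner_prod prodf_seq_eq0 => /hasP [i _ /=].
rewrite hornerD hornerX hornerC addr_eq0 => /eqP ->.
by rewrite rmorphN /= conjC_nat -opprD oppr_le0 addr_ge0 ?ler0n.
Qed.

Lemma Inv_const c N : c != 0 -> Inv (c%:P * pr N) N.
Proof.
by move=> c0; exists c%:P; split => // t; rewrite hornerC => /eqP; rewrite (negPf c0).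
Qed.

Lemma stepT w N P : w * w^* = 1 -> w != 1 -> Inv P N.+1 -> Inv (T w P) N.
Proof.
move=> hw hw1 [p [-> hp]].
exists ('X * shiftn 1 p - w *: (('X + ((N.+1)%:R)%:P) * p)); split.
  rewrite /T shiftn_mul shift_prS prS -!mul_polyC; ring.
exact: key.
Qed.

Lemma step_last w P : w * w^* = 1 -> w != 1 -> Inv P 0 -> Good (T w P).
Proof.
move=> hw hw1 [p [-> hp]] t ht.
have e : ('X * shiftn 1 p - w *: (('X + (0%:R)%:P) * p)) = 'X * T w p.
  by rewrite /T -!mul_polyC; ring.
move: ht; rewrite /pr big_ord0 mulr1 => ht.
have := key hw hw1 hp (t := t); rewrite e hornerM ht mulr0.
by move=> /(_ erefl) ->; rewrite oppr0.
Qed.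

Lemma T0 (w : algC) : T w 0 = 0.
Proof. by rewrite /T /shiftn comp_poly0 scaler0 subr0. Qed.

Lemma foldr_T0 (zs : seq algC) : foldr (@T algC) 0 zs = 0.
Proof. by elim: zs => //= w zs ->; rewrite T0. Qed.

Definition goodw (w : algC) := (w * w^* == 1) && (w != 1).

Lemma chain zs N P : (size zs <= N)%N -> all goodw zs -> Inv P N ->
  Inv (foldr (@T algC) P zs) (N - size zs).
Proof.
elim: zs => [|w zs IH] /=; first by rewrite subn0.
move=> hs /andP [/andP [/eqP hw hw1] ha] hP.
have hs' : (size zs <= N)%N by apply: ltnW.
have := IH hs' ha hP; have -> : (N - size zs = (N - (size zs).+1).+1)%N by lia.
exact: stepT.
Qed.

Lemma chain_final zs N P : (size zs <= N.+1)%N -> all goodw zs -> Inv P N ->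
  Good (foldr (@T algC) P zs).
Proof.
move=> hs ha hP; have [hs'|hs'] := leqP (size zs) N.
  exact: Inv_Good (chain hs' ha hP).
case: zs hs hs' ha => [|w zs] //= hs hs' /andP [/andP [/eqP hw hw1] ha].
have e : size zs = N by lia.
apply: step_last => //; have hz : (size zs <= N)%N by rewrite e.
by have := chain hz ha hP; rewrite e subnn.
Qed.

Lemma step1 c N : T 1 (c%:P * pr N.+1) = (- (N.+1)%:R * c)%:P * pr N.
Proof.
rewrite /T shiftn_mul shift_prS prS /shiftn comp_polyC scale1r polyCM polyCN.
ring.
Qed.

Lemma ones j N c : c != 0 ->
  exists c', c' != 0 /\ iter j (@T algC 1) (c%:P * pr (j + N)) = c'%:P * pr N.
Proof.
elim: j c => [|j IH] c c0; first by exists c.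
rewrite iterSr addSn step1.
have c1 : - (j + N).+1%:R * c != 0 by rewrite mulf_neq0 // oppr_eq0 pnatr_eq0.
exact: IH.
Qed.

End Chain.

Section Main.
Local Notation rC := (ratr : rat -> algC).

Definition BC n : {poly algC} := ((n`!)%:R)^-1 *: pr n.

Lemma mapF n k (d : 'I_k -> nat) :
  map_poly rC (Fpoly n d) =
  \sum_(I : {set 'I_k}) (-1) ^+ #|I| *: shiftn (dsum d I) (BC n).
Proof.
rewrite /Fpoly rmorph_sum /=; apply: eq_bigr => I _ /=.
rewrite map_polyZ rmorph_sign; congr (_ *: _).
rewrite /binom_poly /BC map_polyZ fmorphV rmorph_nat shiftn_scale; congr (_ *: _).
rewrite rmorph_prod /pr shiftn_prodo (reindex_inj rev_ord_inj) /=.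
apply: eq_bigr => i _.
rewrite rmorphB rmorphD /= map_polyX !map_polyC /= rmorph_int rmorph_nat.
rewrite /shiftn comp_polyD comp_polyX comp_polyC.
have -> : ((n%:Z - (dsum d I)%:Z)%:~R : algC) = n%:R - (dsum d I)%:R by rewrite intrB.
rewrite natrB; last by rewrite ltn_ord.
rewrite !polyCB; ring.
Qed.


Lemma polyid k (d : 'I_k -> nat) :
  \sum_(I : {set 'I_k}) (-1) ^+ #|I| *: 'X^(dsum d I) =
  \prod_(i < k) (1 - 'X^(d i) : {poly algC}).
Proof.
rewrite (eq_bigr (fun i => - 'X^(d i) + 1)); last by move=> i _; rewrite addrC.
rewrite bigA_distr; apply: eq_bigr => I _.
rewrite -big_mkcond prodrN prodrXr /dsum.
by rewrite -mul_polyC rmorph_sign.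
Qed.

Lemma FC_act n k (d : 'I_k -> nat) :
  map_poly rC (Fpoly n d) = act (\prod_(i < k) (1 - 'X^(d i))) (BC n).
Proof.
rewrite mapF -polyid act_sum; apply: eq_bigr => I _.
by rewrite actZ act_Xn.
Qed.

Lemma factor_i (z : algC) m : m.-primitive_root z -> (0 < m)%N ->
  1 - 'X^m = - (('X - 1) * \prod_(l < m.-1) ('X - (z ^+ l.+1)%:P)).
Proof.
move=> hz hm; rewrite -[1 - 'X^m]opprK opprB -(factor_Xn_sub_1 hz); congr (- _).
rewrite -(prednK hm) big_nat_recl // expr0 polyC1 prednK //.
by rewrite big_mkord.
Qed.


Lemma prod_i1 N : \prod_(i < N) ((i.+1)%:R : algC) = (N`!)%:R.
Proof.
elim: N => [|N IH]; first by rewrite big_ord0 fact0.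
by rewrite big_ord_recr /= IH factS natrM mulrC.
Qed.

Lemma prod_i2 N : \prod_(i < N) ((i.+2)%:R : algC) = (N.+1`!)%:R.
Proof.
elim: N => [|N IH]; first by rewrite big_ord0.
by rewrite big_ord_recr /= IH (factS N.+1) natrM mulrC.
Qed.

Lemma fact_neq0 N : ((N`!)%:R : algC) != 0.
Proof. by rewrite pnatr_eq0 -lt0n fact_gt0. Qed.

Lemma BC0 n : (BC n).[1 - 0%:R] = (n.+1)%:R.
Proof.
rewrite /BC hornerZ /pr horner_prod subr0.
rewrite (eq_bigr (fun i : 'I_n => ((i.+2)%:R : algC))); last first.
  by move=> i _; rewrite hornerD hornerX hornerC nat1r.
by rewrite prod_i2 factS natrM mulrC mulfK // fact_neq0.
Qed.

Lemma BC1 n : (BC n).[1 - 1%:R] = 1.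
Proof.
rewrite /BC hornerZ /pr horner_prod subrr.
rewrite (eq_bigr (fun i : 'I_n => ((i.+1)%:R : algC))); last first.
  by move=> i _; rewrite hornerD hornerX hornerC add0r.
by rewrite prod_i1 mulVf ?fact_neq0.
Qed.

Lemma BC2 n s : (2 <= s)%N -> (s <= n.+1)%N -> (BC n).[1 - s%:R] = 0.
Proof.
move=> h2 hs; rewrite /BC hornerZ /pr horner_prod.
have hi : (s - 2 < n)%N by lia.
rewrite (bigD1 (Ordinal hi)) //= hornerD hornerX hornerC.
have -> : ((s - 2).+1%:R : algC) = s%:R - 1.
  have -> : (s - 2).+1 = (s - 1)%N by lia.
  by rewrite natrB //; lia.
by rewrite addrC subrKA subrr !mul0r mulr0.
Qed.


Lemma dsum_card k (d : 'I_k -> nat) (I : {set 'I_k}) :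
  (forall i, 0 < d i)%N -> (#|I| <= dsum d I)%N.
Proof. by move=> hd; rewrite /dsum -sum1_card; apply: leq_sum => i _; apply: hd. Qed.

Lemma dsum_le k (d : 'I_k -> nat) (I : {set 'I_k}) :
  (dsum d I <= \sum_(i < k) d i)%N.
Proof. by rewrite /dsum [X in (_ <= X)%N](bigID (fun i => i \in I)) /= leq_addr. Qed.

Lemma F1pos n k (d : 'I_k -> nat) : (forall i, 0 < d i)%N ->
  (\sum_(i < k) d i <= n.+1)%N -> (k <= n)%N ->
  0 < (map_poly rC (Fpoly n d)).[1].
Proof.
move=> hd hD hk.
rewrite mapF horner_sum.
have hsh : forall s, (shiftn s (BC n)).[1] = (BC n).[1 - s%:R].
  by move=> s; rewrite /shiftn horner_comp hornerXsubC.
pose S := (\sum_(I : {set 'I_k} | I != set0) (dsum d I == 1%N) : nat)%N.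
have e : \sum_(I : {set 'I_k}) ((-1) ^+ #|I| *: shiftn (dsum d I) (BC n)).[1]
    = (n.+1)%:R - S%:R.
  rewrite (bigD1 set0) //= hornerZ hsh cards0 expr0 mul1r /dsum big_set0 BC0.
  congr (_ + _); rewrite /S natr_sum -sumrN; apply: eq_bigr => I hI.
  rewrite hornerZ hsh -/(dsum d I).
  have c1 : (1 <= #|I|)%N by rewrite lt0n cards_eq0.
  have c2 := dsum_card I hd.
  have c3 : (dsum d I <= n.+1)%N := leq_trans (dsum_le d I) hD.
  case: (ltngtP (dsum d I) 1) => h.
  - by exfalso; lia.
  - by rewrite BC2 // mulr0 oppr0.
  - have -> : #|I| = 1%N by lia.
    by rewrite h BC1 expr1 mulr1.
have hS : (S <= k)%N.
  apply: (@leq_trans (\sum_(I : {set 'I_k} | I != set0) (#|I| == 1%N) : nat)).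
    apply: leq_sum => I hI.
    have c1 : (1 <= #|I|)%N by rewrite lt0n cards_eq0.
    have c2 := dsum_card I hd.
    by case: eqP => // h; rewrite (_ : #|I| = 1%N) //; lia.
  apply: (@leq_trans (\sum_(I : {set 'I_k}) (#|I| == 1%N) : nat)).
    by rewrite [X in (_ <= X)%N](bigID (fun I => I != set0)) /= leq_addr.
  have -> : (\sum_(I : {set 'I_k}) (#|I| == 1%N) : nat) = #|[set I : {set 'I_k} | #|I| == 1%N]|.
    rewrite -sum1_card [RHS]big_mkcond /=; apply: eq_bigr => I _.
    by rewrite inE; case: (_ == _).
  by rewrite card_draws card_ord bin1.
by rewrite e subr_gt0 ltr_nat; lia.
Qed.

End Main.

Lemma actXsub1 j (P : {poly algC}) : act (('X - 1) ^+ j) P = iter j (@T algC 1) P.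
Proof.
elim: j => [|j IH]; first by rewrite expr0 actC scale1r.
by rewrite exprS actM IH iterS -act_lin polyC1.
Qed.

Lemma goodw_root (z : algC) m l : m.-primitive_root z -> (l.+1 < m)%N ->
  goodw (z ^+ l.+1).
Proof.
move=> hz hl; have m0 : (0 < m)%N by lia.
apply/andP; split.
  have nz : `|z| = 1.
    by apply/eqP; rewrite -(pexpr_eq1 m0) // -normrX (prim_expr_order hz) normr1.
  by rewrite -normCK normrX nz !expr1n.
rewrite -(expr0 z) (eq_prim_root_expr hz) mod0n modn_small //.
Qed.

Unset Implicit Arguments.
Theorem theorem3p6 (n k : nat) (d : 'I_k -> nat) :
  (1 <= n)%N ->
  (forall i, 0 < d i)%N ->
  (\sum_(i < k) d i <= n.+1)%N ->
  forall j : nat, 0 <= (Fpoly n d)`_j.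
Proof.
move=> hn hd hD j.
pose zeta i := sval (C_prim_root_exists (hd i)).
have hz : forall i, (d i).-primitive_root (zeta i).
  by move=> i; exact: (svalP (C_prim_root_exists (hd i))).
pose B := \prod_(i < k) \prod_(l < (d i).-1) ('X - ((zeta i) ^+ l.+1)%:P).
have prodE : \prod_(i < k) (1 - 'X^(d i)) = (-1) ^+ k *: (B * ('X - 1) ^+ k).
  rewrite (eq_bigr (fun i => - (('X - 1) * \prod_(l < (d i).-1) ('X - ((zeta i) ^+ l.+1)%:P)))); last first.
    by move=> i _; apply: factor_i.
  under eq_bigr => i _ do rewrite -[- (_ * _)]mulN1r.
  rewrite big_split /= prodr_const card_ord big_split /= prodr_const card_ord.
  have -> : ((-1) ^+ k : {poly algC}) = ((-1) ^+ k)%:P by rewrite rmorphXn /= polyCN polyC1.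
  by rewrite mul_polyC (mulrC ((_ - 1) ^+ k)).
pose zs := flatten [seq [seq (zeta i) ^+ l.+1 | l <- iota 0 (d i).-1] | i <- enum 'I_k].
have BE : B = \prod_(z <- zs) ('X - z%:P).
  rewrite big_flatten big_map big_enum /=; apply: eq_bigr => i _.
  by rewrite big_map /= -(big_mkord xpredT (fun l => 'X - (zeta i ^+ l.+1)%:P)) /index_iota subn0.
have szs : size zs = (\sum_(i < k) (d i).-1)%N.
  rewrite size_flatten /shape -map_comp sumnE big_map big_enum /=.
  by apply: eq_bigr => i _; rewrite /= size_map size_iota.
have gzs : all goodw zs.
  apply/allP => z /flattenP [s /mapP [i _ ->] /mapP [l hl ->]].
  rewrite mem_iota add0n in hl.
  apply: (goodw_root (hz i)); move: hl (hd i); lia.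
have FCE : map_poly ratr (Fpoly n d) =
    (-1) ^+ k *: foldr (@T algC) (iter k (@T algC 1) (BC n)) zs.
  by rewrite FC_act prodE actZ actM BE act_prod actXsub1.
have hsum1 : (\sum_(i < k) 1 = k)%N by rewrite sum_nat_const card_ord muln1.
have hk : (k <= n.+1)%N.
  apply: leq_trans hD; rewrite -[X in (X <= _)%N]hsum1; apply: leq_sum => i _; exact: hd.
have hsd : (\sum_(i < k) (d i).-1 + k = \sum_(i < k) d i)%N.
  rewrite -[X in (_ + X)%N]hsum1 -big_split /=; apply: eq_bigr => i _.
  by rewrite addn1 prednK.
have c0 : ((n`!)%:R : algC)^-1 != 0 by rewrite invr_eq0 fact_neq0.
case: (leqP k n) => hkn.
  have BCE : BC n = ((n`!)%:R ^-1)%:P * pr (k + (n - k)).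
    by rewrite subnKC // mul_polyC.
  have [c' [c'0 hc]] := ones k (n - k) c0.
  have G : Good (foldr (@T algC) (iter k (@T algC 1) (BC n)) zs).
    rewrite BCE hc; apply: chain_final gzs (Inv_const _ c'0).
    by rewrite szs; lia.
  set FC := map_poly ratr (Fpoly n d) in FCE.
  have gFC : forall t, FC.[t] = 0 -> t + t^* <= 0.
    move=> t; rewrite FCE hornerZ => /eqP; rewrite mulf_eq0 signr_eq0 /=.
    by move/eqP; apply: G.
  have cFC : map_poly (Num.conj_op : algC -> algC) FC = FC.
    apply/polyP => i; rewrite coef_map_id0 ?conjC0 // /FC coef_map /=.
    by rewrite conj_Crat // Crat_rat.
  have [M [hM nM]] := pos_fact (leqnn _) cFC gFC.
  have F1 : 0 < FC.[1] := F1pos hd hD hkn.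
  have M1 : 0 <= M.[1].
    rewrite horner_coef; apply: sumr_ge0 => i _; rewrite expr1n mulr1; exact: nM.
  have lpos : 0 < lead_coef FC.
    move: F1; rewrite {1}hM hornerZ => F1.
    have M1' : 0 < M.[1].
      rewrite lt_def M1 andbT; apply/eqP => M10; move: F1; rewrite M10 mulr0.
      by rewrite ltxx.
    by have := divr_gt0 F1 M1'; rewrite mulfK // gt_eqF.
  rewrite -(ler0q algC) -(coef_map (ratr : rat -> algC)) -/FC hM coefZ.
  by rewrite mulr_ge0 // ltW.
have ek : k = n.+1 by apply/eqP; rewrite eqn_leq hk hkn.
have BCE : BC n = ((n`!)%:R ^-1)%:P * pr (n + 0) by rewrite addn0 mul_polyC.
have [c' [c'0 hc]] := ones n 0 c0.
have I0 : iter k (@T algC 1) (BC n) = 0.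
  rewrite ek iterS BCE hc /pr big_ord0 mulr1 /T /shiftn comp_polyC scale1r.
  by rewrite subrr.
move: FCE; rewrite I0 foldr_T0 scaler0 => /eqP; rewrite map_poly_eq0 => /eqP ->.
by rewrite coef0.
Qed.
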